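(* $\mathrm{H}^1(\mathcal{W},\mathcal{W}\wedge\mathcal{W})=0$, where $\mathcal{W}$ acts on $\mathcal{W}\wedge\mathcal{W}$ via the adjoint action. In particular, every Lie bialgebra structure on $\mathcal{W}$ is coboundary.
   Context: The Witt algebra $\mathcal{W}$ has basis $\{L_n\mid n\in\mathbb{Z}\}$ and bracket $[L_m,L_n]=(m-n)L_{m+n}$. For a Lie algebra $L$ and $L$-module $M$, $\mathrm{H}^1(L,M)$ is the quotient of 1-cocycles (linear $d$ with $d([x,y])=x\cdot d(y)-y\cdot d(x)$) by 1-coboundaries ($x\mapsto x\cdot v$). A Lie bialgebra $(L,\delta)$ is a Lie algebra with a cobracket $\delta:L\to L\wedge L$ satisfying the co-Jacobi identity and being a 1-cocycle with values in $L\wedge L$; it is coboundary if $\delta$ is a 1-coboundary. *)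

(* Defs.v *)
From HB Require Import structures.
From mathcomp Require Import all_boot all_order all_algebra.
Set Implicit Arguments. Unset Strict Implicit. Unset Printing Implicit Defensive.
Import Order.TTheory GRing.Theory Num.Theory.
Local Open Scope ring_scope.

(* Coordinate model of the Witt algebra W over a field F: basis (L_n)_{n : int},
   [L_m, L_n] = (m - n) L_{m+n}.

   An element of W /\ W is encoded by its (antisymmetric, finitely supported)
   coefficient function c : int -> int -> F, representing the tensor
   sum_{i,j} c i j  L_i (x) L_j  = sum_{i<j} c i j  L_i /\ L_j. *)
Definition wedge_elt (F : fieldType) (c : int -> int -> F) : Prop :=
  (forall a b, c a b = - c b a) /\
  exists N : nat, forall a b, (N < absz a)%N \/ (N < absz b)%N -> c a b = 0.

(* Adjoint action of L_m on W /\ W: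
   L_m . (L_i (x) L_j) = (m - i) L_{m+i} (x) L_j + (m - j) L_i (x) L_{m+j},
   so the coefficient of L_a (x) L_b in L_m . c is the following. *)
Definition wact (F : fieldType) (m : int) (c : int -> int -> F) : int -> int -> F :=
  fun a b => (2 * m - a)%:~R * c (a - m) b + (2 * m - b)%:~R * c a (b - m).

(* A linear map d : W -> W /\ W is determined by the images d n := d(L_n),
   which may be chosen arbitrarily in W /\ W.  By bilinearity, the 1-cocycle
   identity d([x,y]) = x.d(y) - y.d(x) holds iff it holds on basis elements. *)
Definition witt_cocycle (F : fieldType) (d : int -> int -> int -> F) : Prop :=
  (forall n, wedge_elt (d n)) /\
  forall m n a b,
    (m - n)%:~R * d (m + n) a b = wact m (d n) a b - wact n (d m) a b.

Definition witt_coboundary (F : fieldType) (d : int -> int -> int -> F) : Prop :=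
  exists v, wedge_elt v /\ forall n a b, d n a b = wact n v a b.

(* Main.v *)
Require Import Defs.
From HB Require Import structures.
From mathcomp Require Import all_boot all_order all_algebra.
From mathcomp Require Import ring lra zify.
Import Order.TTheory GRing.Theory Num.Theory.
Local Open Scope ring_scope.

Section Proof.
Variable F : fieldType.
Variable charF : [pchar F] =i pred0.

Lemma intr_neq0 (k : int) : k != 0 -> (k%:~R : F) != 0.
Proof.
have H := (pcharf0P F).1 charF.
case: k => [n|n] hn /=.
- by rewrite H; apply: contra hn => /eqP ->.
- by rewrite NegzE intrN oppr_eq0 -pmulrn H.
Qed.

Lemma canc {k : int} {x : F} : k != 0 -> k%:~R * x = 0 -> x = 0.
Proof. by move=> /intr_neq0 hk /eqP; rewrite mulf_eq0 (negPf hk) /= => /eqP. Qed.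

Lemma use_eq {x y g : F} : x = y -> g = x - y -> g = 0.
Proof. by move=> -> ->; rewrite subrr. Qed.

Definition cocyc (e : int -> int -> int -> F) := forall m n a b,
  (m - n)%:~R * e (m + n) a b = wact m (e n) a b - wact n (e m) a b.

Lemma jac (v : int -> int -> F) : cocyc (fun n => wact n v).
Proof.
move=> m n a b; rewrite /wact.
have -> : a - m - n = a - (m + n) by ring.
have -> : a - n - m = a - (m + n) by ring.
have -> : b - m - n = b - (m + n) by ring.
have -> : b - n - m = b - (m + n) by ring.
ring.
Qed.

Lemma wactB m (f g : int -> int -> F) a b :
  wact m (fun a b => f a b - g a b) a b = wact m f a b - wact m g a b.
Proof. rewrite /wact; ring. Qed.

Lemma cocycB e (v : int -> int -> F) : cocyc e ->
  cocyc (fun n a b => e n a b - wact n v a b).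
Proof.
move=> He m n a b; rewrite !wactB mulrBr He (jac v m n a b); ring.
Qed.

Lemma hom0 e : cocyc e -> (forall a b, e 0 a b = 0) ->
  forall n a b, a + b != n -> e n a b = 0.
Proof.
move=> He H0 n a b hn.
apply: (@canc (a + b - n)); first by rewrite subr_eq0.
eapply (use_eq (He 0 n a b)).
rewrite /wact !H0 !subr0 (add0r n); ring.
Qed.


Variable d : int -> int -> int -> F.
Hypothesis Hd : cocyc d.
Hypothesis Hanti : forall n a b, d n a b = - d n b a.

Lemma anti_diag n a : d n a a = 0.
Proof.
apply: (@canc 2) => //; apply: (use_eq (Hanti n a a)); ring.
Qed.

Lemma stepA a : d 0 a (- a) = 0.
Proof.
have [->|ha] := eqVneq a 0; first by rewrite oppr0 anti_diag.
apply: (@canc (-2 * a)); first by lia.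
apply: (use_eq (Hd 0 (-a) 0 (-a))).
rewrite /wact.
have -> : 0 + - a = - a by ring.
have -> : (0:int) - 0 = 0 by ring.
have -> : - a - 0 = - a by ring.
have -> : 0 - - a = a by ring.
have -> : - a - - a = 0 by ring.
rewrite anti_diag; ring.
Qed.

Definition D1 (a : int) := d 1 a (1 - a).

Fixpoint Wn (k : nat) : F :=
  match k with
  | 0%N => 0
  | k'.+1 => (D1 (Posz k'.+1) - (2 - Posz k'.+1)%:~R * Wn k') / (1 + Posz k'.+1)%:~R
  end.

Definition Wf (a : int) : F := if (0 <= a) then Wn (absz a) else - Wn (absz a).

Lemma WnS k : Wn k.+1 =
  (D1 (Posz k.+1) - (2 - Posz k.+1)%:~R * Wn k) / (1 + Posz k.+1)%:~R.
Proof. by []. Qed.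

Lemma WfP k : Wf (Posz k) = Wn k. Proof. by []. Qed.
Lemma WfN k : Wf (Negz k) = - Wn k.+1. Proof. by []. Qed.

Lemma Wf_odd a : Wf (- a) = - Wf a.
Proof.
case: a => [[|k]|k]; first by rewrite /Wf /= oppr0.
- by rewrite -NegzE WfN WfP.
- by rewrite NegzE opprK WfP WfN opprK.
Qed.

Lemma R1 a : (2 - a)%:~R * Wf (a - 1) + (1 + a)%:~R * Wf a = D1 a.
Proof.
case: a => [[|k]|k].
- have -> : Posz 0 - 1 = Negz 0 by [].
  rewrite WfN WfP /= /D1.
  have -> : 1 - Posz 1 = 0 by [].
  rewrite (Hanti 1 1 0) /=.
  have h2 : (2%:~R : F) != 0 by apply: intr_neq0.
  rewrite !(intrD, intrB) /=.
  by field.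
- have -> : Posz k.+1 - 1 = Posz k by lia.
  rewrite !WfP /=.
  have h : ((1 + Posz k.+1)%:~R : F) != 0 by apply: intr_neq0; lia.
  by rewrite mulrCA mulfV // mulr1; ring.
- have -> : Negz k - 1 = Negz k.+1 by lia.
  rewrite !WfN.
  have -> : D1 (Negz k) = - D1 (Posz k.+2).
    rewrite /D1 Hanti.
    have -> : 1 - Negz k = Posz k.+2 by lia.
    have -> : 1 - Posz k.+2 = Negz k by lia.
    by [].
  have -> : 2 - Negz k = 1 + Posz k.+2 by lia.
  have -> : 1 + Negz k = 2 - Posz k.+2 by lia.
  have h : ((1 + Posz k.+2)%:~R : F) != 0 by apply: intr_neq0; lia.
  rewrite (WnS k.+1) mulrN mulrCA mulfV // mulr1; ring.
Qed.

Definition v1 (a b : int) : F := if a + b == 0 then 0 else - d 0 a b / (a + b)%:~R.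
Definition wf (a b : int) : F := if a + b == 0 then Wf a else 0.
Definition V (a b : int) : F := v1 a b + wf a b.
Definition d2 (n a b : int) : F := d n a b - wact n V a b.

Lemma V0 a b : a + b = 0 -> V a b = Wf a.
Proof. by move=> h; rewrite /V /v1 /wf h eqxx add0r. Qed.

Lemma V_anti a b : V b a = - V a b.
Proof.
rewrite /V /v1 /wf (addrC b a).
have [h|h] := eqVneq (a + b) 0.
- have -> : b = - a by apply/eqP; rewrite -addr_eq0 addrC h.
  by rewrite Wf_odd !add0r.
- by rewrite !addr0 (Hanti 0 b a) !mulNr opprK.
Qed.

Lemma d2_cocyc : cocyc d2.
Proof. exact: (@cocycB d V Hd). Qed.

Lemma d2_0 a b : d2 0 a b = 0.
Proof.
rewrite /d2 /wact.
have -> : a - 0 = a by ring.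
have -> : b - 0 = b by ring.
have [h|h] := eqVneq (a + b) 0.
- have -> : b = - a by apply/eqP; rewrite -addr_eq0 addrC h.
  rewrite stepA; ring.
- have hab : ((a + b)%:~R : F) != 0 by apply: intr_neq0.
  rewrite /V /v1 /wf (negPf h) !addr0.
  move: hab; rewrite !(intrD, intrB, intrM) => hab.
  by field.
Qed.

Lemma d2_hom n a b : a + b != n -> d2 n a b = 0.
Proof. exact: (@hom0 d2 d2_cocyc d2_0). Qed.

Lemma d2_1 a b : d2 1 a b = 0.
Proof.
have [h|h] := eqVneq (a + b) 1; last exact: d2_hom.
have -> : b = 1 - a by rewrite -h; ring.
rewrite /d2 /wact (@V0 (a - 1) (1 - a)); last by ring.
rewrite (@V0 a (1 - a - 1)); last by ring.
rewrite -/(D1 a) -(R1 a); ring.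
Qed.

Lemma rec_up (f : int -> F) (c1 c2 : int -> int) a0 :
  (forall a, a0 < a -> (c1 a)%:~R * f (a - 1) + (c2 a)%:~R * f a = 0) ->
  (forall a, a0 < a -> c2 a != 0) -> f a0 = 0 -> forall a, a0 <= a -> f a = 0.
Proof.
move=> Hr Hc H0.
have key : forall k : nat, f (a0 + k%:Z) = 0.
  elim=> [|k IH]; first by have -> : a0 + Posz 0 = a0 by lia.
  have ha : a0 < a0 + k.+1%:Z by lia.
  apply: (canc (Hc _ ha)).
  apply: (use_eq (Hr _ ha)).
  have -> : a0 + (k.+1)%:Z - 1 = a0 + k%:Z by lia.
  rewrite IH; ring.
move=> a ha; have -> : a = a0 + (absz (a - a0))%:Z by lia.
exact: key.
Qed.

Lemma rec_left (f : int -> F) (c1 c2 : int -> int) a0 :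
  (forall a, a <= a0 -> (c1 a)%:~R * f (a - 1) + (c2 a)%:~R * f a = 0) ->
  (forall a, a <= a0 -> c1 a != 0) -> f a0 = 0 -> forall a, a <= a0 -> f a = 0.
Proof.
move=> Hr Hc H0.
have key : forall k : nat, f (a0 - k%:Z) = 0.
  elim=> [|k IH]; first by have -> : a0 - Posz 0 = a0 by lia.
  have ha : a0 - k%:Z <= a0 by lia.
  have -> : a0 - (k.+1)%:Z = a0 - k%:Z - 1 by lia.
  apply: (canc (Hc _ ha)).
  apply: (use_eq (Hr _ ha)).
  rewrite IH; ring.
move=> a ha; have -> : a = a0 - (absz (a0 - a))%:Z by lia.
exact: key.
Qed.

Lemma rec_dn (f : int -> F) (c1 c2 : int -> int) lo hi :
  (forall a, lo < a -> (c1 a)%:~R * f (a - 1) + (c2 a)%:~R * f a = 0) ->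
  (forall a, lo < a -> c1 a != 0) -> (forall a, hi <= a -> f a = 0) ->
  forall a, lo <= a -> f a = 0.
Proof.
move=> Hr Hc Hh.
have key : forall k : nat, forall a, hi - k%:Z <= a -> lo <= a -> f a = 0.
  elim=> [|k IH] a h1 h2; first by apply: Hh; lia.
  have [h3|h3] := boolP (hi - k%:Z <= a); first exact: IH.
  have ha : lo < a + 1 by lia.
  apply: (canc (Hc _ ha)).
  apply: (use_eq (Hr _ ha)).
  have -> : a + 1 - 1 = a by ring.
  rewrite (IH (a + 1)); [ring | lia | lia].
move=> a ha; apply: (key (absz (hi - lo))) => //; lia.
Qed.

Definition x (a : int) := d2 (-1) a (-1 - a).
Definition y (a : int) := d2 2 a (2 - a).
Definition z (a : int) := d2 (-2) a (-2 - a).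

Lemma d2_anti n a b : d2 n a b = - d2 n b a.
Proof.
rewrite /d2 /wact (Hanti n a b) (V_anti (b - n) a) (V_anti b (a - n)); ring.
Qed.

Lemma Lx a : (2 - a)%:~R * x (a - 1) + (2 + a)%:~R * x a = 0.
Proof.
apply: (use_eq (esym (d2_cocyc 1 (-1) a (-a)))).
rewrite /wact !d2_1 /x.
have -> : (1 : int) + -1 = 0 by [].
have -> : -1 - (a - 1) = - a by ring.
have -> : - a - 1 = -1 - a by ring.
rewrite d2_0; ring.
Qed.

Lemma Lz a : (2 - a)%:~R * z (a - 1) + (3 + a)%:~R * z a = 3%:~R * x a.
Proof.
apply/eqP; rewrite -subr_eq0; apply/eqP.
apply: (use_eq (esym (d2_cocyc 1 (-2) a (-1 - a)))).
rewrite /wact !d2_1 /x /z.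
have -> : (1 : int) + -2 = -1 by [].
have -> : -2 - (a - 1) = -1 - a by ring.
have -> : -1 - a - 1 = -2 - a by ring.
ring.
Qed.

Lemma LY a : (4 - a)%:~R * x (a - 2) + (a + 3)%:~R * x a
  + (a + 2)%:~R * y (a + 1) - (a - 3)%:~R * y a = 0.
Proof.
apply: (use_eq (esym (d2_cocyc 2 (-1) a (1 - a)))).
rewrite /wact !d2_1 /x /y.
have -> : -1 - (a - 2) = 1 - a by ring.
have -> : 1 - a - 2 = -1 - a by ring.
have -> : a - -1 = a + 1 by ring.
have -> : 2 - (a + 1) = 1 - a by ring.
have -> : 1 - a - -1 = 2 - a by ring.
rewrite ?d2_1; ring.
Qed.

Lemma x_hi a : 2 <= a -> x a = 0.
Proof.
apply: (@rec_up x (fun a => 2 - a) (fun a => 2 + a) 2).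
- by move=> b _; exact: Lx.
- by move=> b hb; lia.
- apply: (@canc 4) => //; apply: (use_eq (Lx 2)); ring.
Qed.

Lemma x_lo a : a <= -3 -> x a = 0.
Proof.
apply: (@rec_left x (fun a => 2 - a) (fun a => 2 + a) (-3)).
- by move=> b _; exact: Lx.
- by move=> b hb; lia.
- apply: (@canc 4) => //; apply: (use_eq (Lx (-2))).
  have -> : (-2 : int) - 1 = -3 by [].
  ring.
Qed.

Lemma z_hi a : 2 <= a -> z a = 0.
Proof.
apply: (@rec_up z (fun a => 2 - a) (fun a => 3 + a) 2).
- move=> b hb; rewrite Lz x_hi ?mulr0 //; lia.
- by move=> b hb; lia.
- apply: (@canc 5) => //; apply: (use_eq (Lz 2)); rewrite x_hi //; ring.
Qed.

Lemma lin3 {e1 e2 e3 g : F} (c1 c2 c3 : F) : e1 = 0 -> e2 = 0 -> e3 = 0 ->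
  g = c1 * e1 + c2 * e2 + c3 * e3 -> g = 0.
Proof. by move=> -> -> -> ->; ring. Qed.

Hypothesis Hfin : forall n, exists N : nat,
  forall a b, (N < absz a)%N \/ (N < absz b)%N -> d n a b = 0.

Lemma W_hi : exists M : nat, forall a, M%:Z <= a -> Wf a = 0.
Proof.
case: (Hfin 1) => N1 h1; case: (Hfin (-2)) => N2 h2.
exists (maxn N1 N2 + 4)%N => b hb.
have hD1 : forall c, (maxn N1 N2)%:Z < c -> D1 c = 0.
  by move=> c hc; apply: h1; left; lia.
have e3 : forall c, (maxn N1 N2)%:Z < c -> 2 <= c ->
    (c + 4)%:~R * Wf (c + 2) - (c - 2)%:~R * Wf c = 0.
  move=> c hc hc2.
  have := @z_hi c hc2; rewrite /z /d2 h2; last by left; lia.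
  rewrite /wact (@V0 (c - -2) (-2 - c)); last by ring.
  rewrite (@V0 c (-2 - c - -2)); last by ring.
  have -> : c - -2 = c + 2 by ring.
  move=> H; apply: (use_eq H); ring.
set a := b - 2.
have ha : (maxn N1 N2)%:Z < a by rewrite /a; lia.
have ha2 : 2 <= a by rewrite /a; lia.
have E1 := R1 (a + 1); rewrite hD1 in E1; last by lia.
have E2 := R1 (a + 2); rewrite hD1 in E2; last by lia.
have E3 := e3 a ha ha2.
rewrite (_ : a + 1 - 1 = a) in E1; last by ring.
rewrite (_ : a + 2 - 1 = a + 1) in E2; last by ring.
have -> : b = a + 2 by rewrite /a; ring.
apply: (@canc (-12)) => //.
apply: (lin3 (a * (a - 2))%:~R ((a - 2) * (a + 2))%:~R (- (a * (a - 1)))%:~R E1 E2 E3).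
ring.
Qed.

Lemma V_fin : exists K : nat, forall a b, (K < absz a)%N \/ (K < absz b)%N -> V a b = 0.
Proof.
case: (Hfin 0) => N0 h0; case: W_hi => M hM.
have hW : forall a, (M < absz a)%N -> Wf a = 0.
  move=> a ha; have [hp|hn] := lerP 0 a.
  - by apply: hM; lia.
  - have -> : a = - (- a) by rewrite opprK.
    by rewrite Wf_odd hM ?oppr0 //; lia.
exists (maxn N0 M) => a b hab.
rewrite /V /v1 /wf h0; last by case: hab => h; [left|right]; lia.
rewrite oppr0 mul0r if_same add0r.
have [h|//] := eqVneq (a + b) 0.
apply: hW; case: hab => h'; lia.
Qed.

Lemma y_fin : exists H : int, forall a, H <= a -> y a = 0.
Proof.
case: (Hfin 2) => N h; case: V_fin => K hK.
exists (N%:Z + K%:Z + 3) => a ha.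
rewrite /y /d2 /wact h; last by left; lia.
rewrite !hK; [ring | left; lia | left; lia].
Qed.

Lemma y_hi a : 4 <= a -> y a = 0.
Proof.
case: y_fin => H hH.
apply: (@rec_dn y (fun a => 4 - a) (fun a => a + 1) 4 H) => //.
- move=> b hb; apply: (use_eq (LY (b - 1))).
  rewrite (@x_hi (b - 1 - 2)); last by lia.
  rewrite (@x_hi (b - 1)); last by lia.
  have -> : b - 1 + 1 = b by ring.
  ring.
- by move=> b hb; lia.
Qed.

Lemma x_all a : x a = 0.
Proof.
have x1 : x 1 = 0.
  apply: (@canc 1) => //; apply: (use_eq (LY 3)).
  rewrite (@x_hi 3) // (@y_hi (3 + 1)) //.
  have -> : (3 : int) - 2 = 1 by [].
  ring.
have x0 : x 0 = 0.
  apply: (@canc 1) => //; apply: (use_eq (Lx 1)).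
  have -> : (1 : int) - 1 = 0 by [].
  rewrite x1; ring.
have xm1 : x (-1) = 0.
  apply: (@canc 2) => //; apply: (use_eq (Lx 0)).
  have -> : (0 : int) - 1 = -1 by [].
  rewrite x0; ring.
have xm2 : x (-2) = 0.
  apply: (@canc 3) => //; apply: (use_eq (Lx (-1))).
  have -> : (-1 : int) - 1 = -2 by [].
  rewrite xm1; ring.
have : a <= -3 \/ a = -2 \/ a = -1 \/ a = 0 \/ a = 1 \/ 2 <= a by lia.
by case=> [h|[->|[->|[->|[->|h]]]]] //; [exact: x_lo | exact: x_hi].
Qed.

Lemma y_all a : y a = 0.
Proof.
have Ly : forall b, (4 - b)%:~R * y (b - 1) + (b + 1)%:~R * y b = 0.
  move=> b; apply: (use_eq (LY (b - 1))); rewrite !x_all.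
  have -> : b - 1 + 1 = b by ring.
  ring.
have ylo : forall b, b <= -2 -> y b = 0.
  apply: (@rec_left y (fun a => 4 - a) (fun a => a + 1) (-2)).
  - by move=> b _; exact: Ly.
  - by move=> b hb; lia.
  - apply: (@canc 5) => //; apply: (use_eq (Ly (-1))).
    have -> : (-1 : int) - 1 = -2 by [].
    ring.
have y1 : y 1 = 0.
  apply: (@canc 2) => //; apply: (use_eq (d2_anti 2 1 (2 - 1))).
  rewrite /y; have -> : (2 : int) - 1 = 1 by [].
  ring.
have y2 : y 2 = 0.
  apply: (@canc 3) => //; apply: (use_eq (Ly 2)).
  have -> : (2 : int) - 1 = 1 by [].
  rewrite y1; ring.
have y3 : y 3 = 0.
  apply: (@canc 4) => //; apply: (use_eq (Ly 3)).
  have -> : (3 : int) - 1 = 2 by [].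
  rewrite y2; ring.
have y0 : y 0 = 0.
  apply: (@canc 3) => //; apply: (use_eq (Ly 1)).
  have -> : (1 : int) - 1 = 0 by [].
  rewrite y1; ring.
have ym1 : y (-1) = 0.
  apply: (@canc 4) => //; apply: (use_eq (Ly 0)).
  have -> : (0 : int) - 1 = -1 by [].
  rewrite y0; ring.
have : a <= -2 \/ a = -1 \/ a = 0 \/ a = 1 \/ a = 2 \/ a = 3 \/ 4 <= a by lia.
by case=> [h|[->|[->|[->|[->|[->|h]]]]]] //; [exact: ylo | exact: y_hi].
Qed.

Lemma z_all a : z a = 0.
Proof.
have Lz' : forall b, (2 - b)%:~R * z (b - 1) + (3 + b)%:~R * z b = 0.
  by move=> b; rewrite Lz x_all mulr0.
have zlo : forall b, b <= -4 -> z b = 0.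
  apply: (@rec_left z (fun a => 2 - a) (fun a => 3 + a) (-4)).
  - by move=> b _; exact: Lz'.
  - by move=> b hb; lia.
  - apply: (@canc 5) => //; apply: (use_eq (Lz' (-3))).
    have -> : (-3 : int) - 1 = -4 by [].
    ring.
have zm1 : z (-1) = 0.
  apply: (@canc 2) => //; apply: (use_eq (d2_anti (-2) (-1) (-2 - -1))).
  rewrite /z; have -> : (-2 : int) - -1 = -1 by [].
  ring.
have z0 : z 0 = 0.
  apply: (@canc 3) => //; apply: (use_eq (Lz' 0)).
  have -> : (0 : int) - 1 = -1 by [].
  rewrite zm1; ring.
have z1 : z 1 = 0.
  apply: (@canc 4) => //; apply: (use_eq (Lz' 1)).
  have -> : (1 : int) - 1 = 0 by [].
  rewrite z0; ring.
have zm2 : z (-2) = 0.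
  apply: (@canc 3) => //; apply: (use_eq (Lz' (-1))).
  have -> : (-1 : int) - 1 = -2 by [].
  rewrite zm1; ring.
have zm3 : z (-3) = 0.
  apply: (@canc 4) => //; apply: (use_eq (Lz' (-2))).
  have -> : (-2 : int) - 1 = -3 by [].
  rewrite zm2; ring.
have : a <= -4 \/ a = -3 \/ a = -2 \/ a = -1 \/ a = 0 \/ a = 1 \/ 2 <= a by lia.
by case=> [h|[->|[->|[->|[->|[->|h]]]]]] //; [exact: zlo | exact: z_hi].
Qed.

Lemma d2_small n a b : -2 <= n <= 2 -> d2 n a b = 0.
Proof.
move=> hn.
have [h|h] := eqVneq (a + b) n; last exact: d2_hom.
have hb : b = n - a by rewrite -h; ring.
have : n = -2 \/ n = -1 \/ n = 0 \/ n = 1 \/ n = 2 by lia.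
rewrite hb; case=> [->|[->|[->|[->|->]]]].
- exact: z_all.
- exact: x_all.
- exact: d2_0.
- exact: d2_1.
- exact: y_all.
Qed.

Lemma d2_all n a b : d2 n a b = 0.
Proof.
have key : forall k : nat, (forall a b, d2 (Posz k.+2) a b = 0) /\
                           (forall a b, d2 (- Posz k.+2) a b = 0).
  elim=> [|k [IHp IHn]].
  - by split=> a' b'; apply: d2_small; lia.
  split=> a' b'.
  - apply: (@canc (1 - Posz k.+2)); first by lia.
    have -> : Posz k.+3 = 1 + Posz k.+2 by lia.
    rewrite (d2_cocyc 1 (Posz k.+2) a' b') /wact !IHp !d2_1; ring.
  - apply: (@canc (-1 - - Posz k.+2)); first by lia.
    have -> : - Posz k.+3 = -1 + - Posz k.+2 by lia.
    rewrite (d2_cocyc (-1) (- Posz k.+2) a' b') /wact !IHn.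
    rewrite !(@d2_small (-1)) ?mulr0 //; ring.
have : -2 <= n <= 2 \/ (exists k : nat, n = Posz k.+2) \/ (exists k : nat, n = - Posz k.+2).
  case: n => [[|[|[|k]]]|[|k]].
  - by left.
  - by left.
  - by left.
  - by right; left; exists k.+1.
  - by left.
  - by right; right; exists k; rewrite NegzE.
case=> [h|[[k ->]|[k ->]]].
- exact: d2_small.
- exact: (key k).1.
- exact: (key k).2.
Qed.
End Proof.

Theorem theoremP0 (F : fieldType) (charF : [pchar F] =i pred0)
  (d : int -> int -> int -> F) :
  witt_cocycle d -> witt_coboundary d.
Proof.
case=> Hw Hc.
have Hanti : forall n a b, d n a b = - d n b a by move=> n; exact: (Hw n).1.
have Hfin : forall n, exists N : nat,
    forall a b, (N < absz a)%N \/ (N < absz b)%N -> d n a b = 0.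
  by move=> n; exact: (Hw n).2.
exists (@V F d); split.
- split; first by move=> a b; rewrite (@V_anti F d Hanti).
  exact: (@V_fin F charF d Hc Hanti Hfin).
- move=> n a b; apply/eqP; rewrite -subr_eq0; apply/eqP.
  exact: (@d2_all F charF d Hc Hanti Hfin).
Qed.
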